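(* Let $(X,d)$ be a compact doubling metric space with $\operatorname{diam}(X,d)=1/2$ and $(\mathcal S,D_2)$ a hyperbolic filling with parameters $a\ge\lambda\ge6$. Let $\rho:\mathcal S\to(0,\infty)$ satisfy (H3'). Let $k\ge0$, $v\in\mathcal S_k$, and let $\gamma=(v_1,\dots,v_N)$ be a horizontal path of level $k+1$ with $\pi_1(v_i)\in B(\pi_1(v),3a^{-k})$ for all $i$, $\pi_1(v_1)\in B(\pi_1(v),a^{-k})$ and $\pi_1(v_N)\notin B(\pi_1(v),2a^{-k})$. Let $w$ be the parent of $v_1$. Then \[ \sum_{i=1}^{N-1}\pi^*(v_i)\wedge\pi^*(v_{i+1})\ge\max\{\pi^*(v),\pi^*(w)\}. \]
   Context: Hyperbolic filling: $X_0\subset X_1\subset\cdots$ increasing, $X_n$ maximal $a^{-n}$-separated in $X$ ($X_0=\{x_0\}$); $\mathcal S_n=\{(x,n):x\in X_n\}$, $\mathcal S=\bigcup_n\mathcal S_n$, $\pi_1(x,n)=x$, $\pi_2(x,n)=n$, $v_0=(x_0,0)$, $B_v=B(\pi_1(v),a^{-\pi_2(v)})$. Each $(x,n)$, $n\ge1$, has a fixed parent $(y,n-1)$ with $d(x,y)=\min_{z\in X_{n-1}}d(x,z)$; genealogy $g(v)=(v_0,\dots,v_k=v)$. Graph $(\mathcal S,D_2)$: edges vertex–parent and horizontal edges between distinct $(x,n),(y,n)$ with $B(x,\lambda a^{-n})\cap B(y,\lambda a^{-n})\ne\emptyset$. A horizontal path of level $k+1$ is a sequence of vertices of $\mathcal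 S_{k+1}$, consecutive ones joined by horizontal edges. For $u\in\mathcal S_k$, $\Gamma_k(u)$ is the set of horizontal paths $(u_1,\dots,u_n)$ of level $k+1$ with $\pi_1(u_1)\in B_u$ and $\pi_1(u_n)\notin B(\pi_1(u),2a^{-k})$. $\pi(u)=\prod_{w\in g(u)}\rho(w)$; $\rho^*(u)=\min\{\rho(w):\pi_2(w)=\pi_2(u),D_2(u,w)\le1\}$; $\pi^*(u)=\min\{\pi(w):\pi_2(w)=\pi_2(u),D_2(u,w)\le1\}$; for a horizontal path $\gamma=(u_1,\dots,u_N)$, $L_h(\gamma,\rho)=\sum_{j=1}^{N-1}\rho^*(u_j)\wedge\rho^*(u_{j+1})$. (H3'): for all $k\ge0$, $u\in\mathcal S_k$, $\gamma\in\Gamma_k(u)$, $L_h(\gamma,\rho)\ge1$. *)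

(* Defs.v *)
From HB Require Import structures.
From mathcomp Require Import all_boot all_order all_algebra.
From mathcomp Require Import all_classical all_reals.
Set Implicit Arguments. Unset Strict Implicit. Unset Printing Implicit Defensive.
Import Order.TTheory GRing.Theory Num.Theory.
Local Open Scope classical_set_scope.
Local Open Scope ring_scope.

Section HypFilling.
Variables (R : realType) (X : Type) (d : X -> X -> R).

Definition ball_d (x : X) (r : R) : set X := [set y | d x y < r].

Definition is_metric : Prop :=
  [/\ forall x y, 0 <= d x y,
      forall x y, d x y = 0 <-> x = y,
      forall x y, d x y = d y x &
      forall x y z, d x z <= d x y + d y z].

Definition metric_compact : Prop :=
  forall u : nat -> X, exists (phi : nat -> nat) (l : X),
    (forall n m, (n < m)%N -> (phi n < phi m)%N) /\
    (forall e : R, 0 < e -> exists N, forall n, (N <= n)%N -> d (u (phi n)) l < e).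

Definition metric_doubling : Prop :=
  exists C : nat, forall (x : X) (r : R), 0 < r ->
    exists s : seq X, (size s <= C)%N /\
      ball_d x (2 * r) `<=` [set y | exists2 i, (i < size s)%N & d (nth x s i) y < r].

Definition diam : R := sup [set r | exists x y, r = d x y].

Definition separated (eps : R) (A : set X) : Prop :=
  forall x y, A x -> A y -> x <> y -> eps <= d x y.

Definition maximal_separated (eps : R) (A : set X) : Prop :=
  separated eps A /\ forall B : set X, A `<=` B -> separated eps B -> B = A.

Variables (a lam : R) (Xn : nat -> set X) (x0 : X) (par : X -> nat -> X).

(* Xn, x0, par form a hyperbolic filling with parameters a, lam.
   par x n is the first coordinate of the fixed parent (y, n-1) of (x, n). *)
Definition hyperbolic_filling : Prop :=
  [/\ forall n, Xn n `<=` Xn n.+1,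
      forall n, maximal_separated (a ^- n) (Xn n),
      Xn 0%N = [set x0] &
      forall n x, Xn n.+1 x ->
        Xn n (par x n.+1) /\ forall z, Xn n z -> d x (par x n.+1) <= d x z].

Definition vtx (u : X * nat) : Prop := Xn u.2 u.1.

Definition hedge (u w : X * nat) : Prop :=
  [/\ u.2 = w.2, u <> w &
      exists z, ball_d u.1 (lam * a ^- u.2) z /\ ball_d w.1 (lam * a ^- w.2) z].

Definition pedge (u w : X * nat) : Prop :=
  (u.2 = w.2.+1 /\ w.1 = par u.1 u.2) \/ (w.2 = u.2.+1 /\ u.1 = par w.1 w.2).

Definition edge (u w : X * nat) : Prop := vtx u /\ vtx w /\ (pedge u w \/ hedge u w).

(* D2_le n u w  <->  D2(u,w) <= n  (graph distance in (S, D2)) *)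
Fixpoint D2_le (n : nat) (u w : X * nat) : Prop :=
  match n with
  | 0%N => u = w
  | m.+1 => D2_le m u w \/ exists z, edge u z /\ D2_le m z w
  end.

Variable rho : X * nat -> R.

(* pi(u) = product of rho over the genealogy of u *)
Fixpoint piv (x : X) (n : nat) : R :=
  match n with
  | 0%N => rho (x, 0%N)
  | m.+1 => rho (x, m.+1) * piv (par x m.+1) m
  end.

Definition pi_ (u : X * nat) : R := piv u.1 u.2.

Definition min_nbhd (f : X * nat -> R) (u : X * nat) : R :=
  inf [set r | exists w, [/\ vtx w, w.2 = u.2, D2_le 1 u w & r = f w]].

Definition rhostar := min_nbhd rho.
Definition pistar := min_nbhd pi_.

(* horizontal path of level k, given by the first coordinates of its vertices *)
Definition hpath (k : nat) (g : seq X) : Prop :=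
  (0 < size g)%N /\
  (forall i, (i < size g)%N -> vtx (nth x0 g i, k)) /\
  (forall i, (i.+1 < size g)%N -> hedge (nth x0 g i, k) (nth x0 g i.+1, k)).

Definition Gamma (k : nat) (u : X * nat) (g : seq X) : Prop :=
  [/\ hpath k.+1 g, ball_d u.1 (a ^- k) (head x0 g) &
      ~ ball_d u.1 (2 * a ^- k) (last x0 g)].

Definition Lh (k : nat) (g : seq X) : R :=
  \sum_(i < (size g).-1)
     Num.min (rhostar (nth x0 g i, k)) (rhostar (nth x0 g i.+1, k)).

Definition H3' : Prop :=
  forall (k : nat) (u : X * nat), vtx u -> u.2 = k ->
    forall g, Gamma k u g -> 1 <= Lh k.+1 g.

End HypFilling.

(* Main.v *)
Require Import Defs.
From HB Require Import structures.
From mathcomp Require Import all_boot all_order all_algebra.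
From mathcomp Require Import all_classical all_reals.
From mathcomp Require Import lra zify.
Import Order.TTheory GRing.Theory Num.Theory.
Local Open Scope classical_set_scope.
Local Open Scope ring_scope.

Section Aux.
Variables (R : realType) (X : Type) (d : X -> X -> R) (a lam : R)
  (Xn : nat -> set X) (x0 : X) (par : X -> nat -> X) (rho : X * nat -> R).
Hypothesis hd : is_metric d.
Hypothesis hf : hyperbolic_filling d a Xn x0 par.
Hypothesis hrho : forall u, vtx Xn u -> 0 < rho u.

Lemma piv_pos n : forall x, Xn n x -> 0 < piv par rho x n.
Proof.
elim: n => [|n IH] x hx /=; first exact: (hrho (x,0%N)).
case: hf => _ _ _ hp; have [hpx _] := hp n x hx.
by rewrite mulr_gt0 //; [exact: (hrho (x, n.+1)) | exact: IH].
Qed.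

Lemma mn_lb f u w : (forall v, vtx Xn v -> 0 < f v) -> vtx Xn w -> w.2 = u.2 ->
  D2_le d a lam Xn par 1 u w -> min_nbhd d a lam Xn par f u <= f w.
Proof.
move=> fpos hw hl hD; apply: (@ge_inf _ _).
  by exists 0 => r [v [hv _ _ ->]]; exact/ltW/fpos.
by exists w.
Qed.

Lemma mn_ge f u c : vtx Xn u ->
  (forall w, vtx Xn w -> w.2 = u.2 -> D2_le d a lam Xn par 1 u w -> c <= f w) ->
  c <= min_nbhd d a lam Xn par f u.
Proof.
move=> hu H; apply: lb_le_inf.
  by exists (f u), u; split => //; left.
by move=> r [w [hw hl hD ->]]; exact: H.
Qed.

Lemma mn_ge0 f u : (forall v, vtx Xn v -> 0 < f v) -> vtx Xn u ->
  0 <= min_nbhd d a lam Xn par f u.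
Proof. by move=> fpos hu; apply: mn_ge => // w hw _ _; exact/ltW/fpos. Qed.

Lemma nb_inv u w : w.2 = u.2 -> D2_le d a lam Xn par 1 u w ->
  u = w \/ hedge d a lam u w.
Proof.
move=> hl [/= ->|[z [[_ [_ hE]] /= hz]]]; first by left.
subst z; case: hE => [[[h1 _]|[h1 _]]|h]; last by right.
- by exfalso; move: h1 hl; lia.
- by exfalso; move: h1 hl; lia.
Qed.

Lemma nb_mk u w z : vtx Xn u -> vtx Xn w -> u.2 = w.2 ->
  d u.1 z < lam * a ^- u.2 -> d w.1 z < lam * a ^- w.2 ->
  D2_le d a lam Xn par 1 u w.
Proof.
move=> hu hw hl h1 h2; case: (pselect (u = w)) => [->|hne]; first by left.
right; exists w; split => //; split => //; split => //; right; split => //.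
by exists z.
Qed.

Hypothesis ha : 0 < a.

Lemma par_close n x : Xn n.+1 x -> d x (par x n.+1) < a ^- n.
Proof.
move=> hx; case: hf => _ hms _ hp; have [_ hmin] := hp n x hx.
suff [z [hz1 hz2]] : exists z, Xn n z /\ d x z < a ^- n.
  exact: le_lt_trans (hmin z hz1) hz2.
apply: contrapT => hno.
have hge : forall z, Xn n z -> a ^- n <= d x z.
  move=> z hz; rewrite leNgt; apply/negP => hlt; apply: hno; by exists z.
case: hd => _ hd0 hsym _.
have [hsep hmax] := hms n.
have E : (Xn n `|` [set x]) = Xn n.
  apply: hmax; first by move=> y hy; left.
  move=> y1 y2 [h1|h1] [h2|h2] hne.
  - exact: hsep.
  - by rewrite h2 hsym; exact: hge.
  - by rewrite h1; exact: hge.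
  - by exfalso; apply: hne; rewrite h1 h2.
have hxn : Xn n x by rewrite -E; right.
have := hge x hxn; rewrite (proj2 (hd0 x x) erefl) => h.
have : 0 < a ^- n by rewrite invr_gt0 exprn_gt0.
by rewrite ltNge h.
Qed.

Hypothesis hl6 : 6 <= lam.
Hypothesis hla : lam <= a.

Lemma pi_pos v : vtx Xn v -> 0 < pi_ par rho v.
Proof. by case: v => x n; exact: piv_pos. Qed.

Lemma step_bound k : lam * a ^- k.+1 <= a ^- k.
Proof.
have ht : 0 <= a ^- k by rewrite invr_ge0 exprn_ge0 // ltW.
rewrite exprSr invfM mulrCA -[leRHS]mulr1; apply: ler_wpM2l => //.
by rewrite ler_pdivrMr // mul1r.
Qed.

Lemma key k y g i : Xn k y -> hpath d a lam Xn x0 k.+1 g -> (i < size g)%N ->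
  d y (nth x0 g i) < 5 * a ^- k ->
  rhostar d a lam Xn par rho (nth x0 g i, k.+1) * pistar d a lam Xn par rho (y, k)
  <= pistar d a lam Xn par rho (nth x0 g i, k.+1).
Proof.
move=> hy [_ [hv _]] hi hdy; set vi := nth x0 g i.
have hvi : Xn k.+1 vi := hv i hi.
have ht : 0 < a ^- k by rewrite invr_gt0 exprn_gt0.
have hs : 0 < a ^- k.+1 by rewrite invr_gt0 exprn_gt0.
have hst := step_bound k.
case: hd => hd0 hdz hsym htri.
rewrite /pistar; apply: mn_ge => // -[ux un] hu /= hl hD; subst un.
rewrite /pi_ /=.
case: hf => _ _ _ hp; have [hpx _] := hp k ux hu.
apply: ler_pM.
- exact: (@mn_ge0 rho (vi,k.+1) hrho (hv i hi)).
- exact: (@mn_ge0 (pi_ par rho) (y,k) pi_pos hy).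
- exact: (@mn_lb rho (vi,k.+1) (ux,k.+1) hrho hu erefl hD).
have hduv : d ux vi < 2 * lam * a ^- k.+1.
  case: (@nb_inv (vi,k.+1) (ux,k.+1) erefl hD) => [[->]|[_ _ [z [/= h1 h2]]]].
    by rewrite (proj2 (hdz ux ux) erefl) !mulr_gt0 // (lt_le_trans _ hl6).
  apply: (le_lt_trans (htri _ z _)); rewrite (hsym z vi); move: h1 h2; rewrite /ball_d /=; lra.
have hpu := par_close _ _ hu.
apply: (@mn_lb (pi_ par rho) (y,k) (par ux k.+1, k) pi_pos hpx erefl); apply: (@nb_mk (y,k) (par ux k.+1, k) vi hy hpx erefl) => /=.
  apply: (lt_le_trans hdy); apply: ler_wpM2r.
- exact: ltW.
- apply: le_trans hl6; rewrite ler_nat //.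
have h6 : 6 * a ^- k <= lam * a ^- k by apply: ler_wpM2r => //; exact: ltW.
apply: (le_lt_trans (htri _ ux _)); rewrite hsym; move: hpu => /= hpu.
lra.
Qed.


Lemma final k y g : Xn k y -> hpath d a lam Xn x0 k.+1 g ->
  (forall i, (i < size g)%N -> d y (nth x0 g i) < 5 * a ^- k) ->
  1 <= Lh d a lam Xn x0 par rho k.+1 g ->
  pistar d a lam Xn par rho (y, k) <=
  \sum_(i < (size g).-1)
     Num.min (pistar d a lam Xn par rho (nth x0 g i, k.+1))
             (pistar d a lam Xn par rho (nth x0 g i.+1, k.+1)).
Proof.
move=> hy hg hdist hL.
have hc0 : 0 <= pistar d a lam Xn par rho (y, k) by exact: (@mn_ge0 (pi_ par rho) (y,k) pi_pos hy).
have [hsz _] := hg.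
rewrite -[leLHS]mulr1; apply: (le_trans (ler_wpM2l hc0 hL)).
rewrite /Lh mulr_sumr; apply: ler_sum => i _.
have hi1 : (i.+1 < size g)%N by have := ltn_ord i; lia.
have hi : (i < size g)%N by lia.
rewrite le_min; apply/andP; split.
- apply: le_trans _ (@key k y g i hy hg hi (hdist i hi)).
  by rewrite mulrC; apply: ler_wpM2r => //; rewrite ge_min lexx.
- apply: le_trans _ (@key k y g i.+1 hy hg hi1 (hdist i.+1 hi1)).
  by rewrite mulrC; apply: ler_wpM2r => //; rewrite ge_min lexx orbT.
Qed.

End Aux.

Theorem lemma3p18 (R : realType) (X : Type) (d : X -> X -> R)
  (a lam : R) (Xn : nat -> set X) (x0 : X) (par : X -> nat -> X)
  (rho : X * nat -> R) :
  is_metric d -> metric_compact d -> metric_doubling d ->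
  diam d = 1 / 2 ->
  6 <= lam -> lam <= a ->
  hyperbolic_filling d a Xn x0 par ->
  (forall u, vtx Xn u -> 0 < rho u) ->
  H3' d a lam Xn x0 par rho ->
  forall (k : nat) (xv : X) (g : seq X),
    Xn k xv ->
    hpath d a lam Xn x0 k.+1 g ->
    (forall i, (i < size g)%N -> ball_d d xv (3 * a ^- k) (nth x0 g i)) ->
    ball_d d xv (a ^- k) (head x0 g) ->
    ~ ball_d d xv (2 * a ^- k) (last x0 g) ->
    let pis := pistar d a lam Xn par rho in
    Num.max (pis (xv, k)) (pis (par (head x0 g) k.+1, k))
    <= \sum_(i < (size g).-1)
         Num.min (pis (nth x0 g i, k.+1)) (pis (nth x0 g i.+1, k.+1)).
Proof.
move=> hd _ _ _ hl6 hla hf hrho hH k xv g hxv hg hball hhead hlast; cbv zeta.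

have ha : 0 < a by apply: (lt_le_trans _ (le_trans hl6 hla)).
have ht : 0 < a ^- k by rewrite invr_gt0 exprn_gt0.
have hL : 1 <= Lh d a lam Xn x0 par rho k.+1 g.
  by apply: (hH k (xv, k) hxv erefl g); split.
have [hsz [hv _]] := hg.
have hb : forall i, (i < size g)%N -> d xv (nth x0 g i) < 3 * a ^- k by exact: hball.
have hh : head x0 g = nth x0 g 0 by case: (g).
rewrite ge_max; apply/andP; split.
  apply: (@final R X d a lam Xn x0 par rho hd hf hrho ha hl6 hla) => // i hi; apply: (lt_trans (hb i hi)); lra.
have hv1 : Xn k.+1 (head x0 g) by rewrite hh; exact: (hv 0%N hsz).
case: (hf) => _ _ _ hp; have [hw _] := hp k _ hv1.
have hpc := @par_close R X d a Xn x0 par hd hf ha k _ hv1.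
case: (hd) => _ _ hsym htri.
apply: (@final R X d a lam Xn x0 par rho hd hf hrho ha hl6 hla) => // i hi.
have h1 : d xv (head x0 g) < a ^- k by exact: hhead.
have := hb i hi.
have := htri (par (head x0 g) k.+1) (head x0 g) (nth x0 g i).
have := htri (head x0 g) xv (nth x0 g i).
have e1 := hsym (head x0 g) (par (head x0 g) k.+1).
have e2 := hsym xv (head x0 g).
lra.
Qed.
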